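(* Let $T$ be an $\mathbb{N}$-tableau and let $\widehat{T}$ be its image under the toggle map defined in the context. Then the image of the transpose $T^t$ under the toggle map is $\widehat{T}^t$.
   Context: Partitions are drawn in English notation with matrix coordinates: the box in row $i$ and column $j$ is $(i,j)$. An $\mathbb{N}$-tableau of shape $\lambda$ is an assignment of a nonnegative integer to each box of $\lambda$; its transpose $T^t$ has shape the conjugate partition $\lambda'$ and entry $t_{ji}$ at $(i,j)$. A corner box of a partition is a box $(i,j)$ such that neither $(i+1,j)$ nor $(i,j+1)$ is a box. The toggle map $T\mapsto\widehat{T}$ is defined recursively: $\widehat{\emptyset}=\emptyset$; if $T'$ is obtained from $T$ by adding a corner box $(i,j)$ (of $\mathrm{sh}(T')$) with entry $x$, then $\widehat{T'}$ is obtained from $\widehat{T}$ as follows. For $k\ge1$ let $\beta_k,\gamma_k,\alpha_k$ be the entries of $\widehat{T}$ at $(i-k,j-k)$, $(i-k+1,j-k)$, $(i-k,j-k+1)$ respectively (taken to be $0$ if the box is not in $\mathrm{sh}(T)$). Then $\widehat{T'}$ agrees with $\widehat{T}$ except that for $1\le k<\min(i,j)$ the entry at $(i-k,j-k)$ becomes $\max(\alpha_{k+1},\gamma_{k+1})+\min(\alpha_k,\gamma_k)-\beta_k$, and the entry at $(i,j)$ is $\max(\alpha_1,\gamma_1)+x$. This is independent of the order in which boxes are added. *)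

(* Defs.v *)
From mathcomp Require Import all_boot all_order all_algebra.
Set Implicit Arguments. Unset Strict Implicit. Unset Printing Implicit Defensive.
Import Order.TTheory GRing.Theory Num.Theory.

(* Partitions: weakly decreasing sequences of positive parts; row r (1-indexed)
   has length nth 0 lam (r-1).  Boxes are (row, column), both 1-indexed. *)
Definition is_partition (lam : seq nat) : bool :=
  sorted (fun a b => b <= a) lam && all (fun x => 0 < x) lam.

Definition in_shape (lam : seq nat) (i j : nat) : bool :=
  (0 < i <= size lam) && (0 < j <= nth 0 lam i.-1).

Definition conj_part (lam : seq nat) : seq nat :=
  mkseq (fun c => count (fun x => c < x) lam) (head 0 lam).

(* An N-tableau of shape lam is given by its entries t i j at the boxes (i,j)
   of lam (values off the shape are irrelevant).  Transpose: entry t j i at (i,j). *)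
Definition transpose {A} (t : nat -> nat -> A) : nat -> nat -> A :=
  fun i j => t j i.

(* Boxes of lam in row reading order (row by row, left to right).  Each box,
   when added in this order, is a corner box of the shape built so far. *)
Definition boxes (lam : seq nat) : seq (nat * nat) :=
  flatten [seq [seq (i.+1, j.+1) | j <- iota 0 (nth 0 lam i)] | i <- iota 0 (size lam)].

Local Open Scope ring_scope.

(* One step of the toggle map: the current toggled tableau has shape given by
   the list [added] of its boxes and entries [h]; we add the corner box (i,j)
   with entry x.  Entries off the current shape are read as 0.  Computed in int. *)
Definition toggle_step (x : nat) (st : seq (nat * nat) * (nat -> nat -> int))
    (ij : nat * nat) : seq (nat * nat) * (nat -> nat -> int) :=
  let: (added, h) := st in
  let: (i, j) := ij in
  let v a b : int := if (a, b) \in added then h a b else 0 in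
  let h' a b : int :=
    if (a == i) && (b == j) then Num.max (v i.-1 j) (v i j.-1) + x%:Z
    else if [&& (a < i)%N, (b < j)%N, (i - a == j - b)%N & (i - a < minn i j)%N]
    then (* a = i-k, b = j-k, 1 <= k < min(i,j) *)
      Num.max (v a.-1 b) (v a b.-1) + Num.min (v a b.+1) (v a.+1 b) - v a b
    else h a b in
  (rcons added (i, j), h').

Definition toggle (lam : seq nat) (t : nat -> nat -> nat) : nat -> nat -> int :=
  (foldl (fun st ij => toggle_step (t ij.1 ij.2) st ij)
         ([::], fun _ _ => 0) (boxes lam)).2.

(* Main.v *)
Require Import Defs.
From mathcomp Require Import all_boot all_order all_algebra zify.
Set Implicit Arguments. Unset Strict Implicit. Unset Printing Implicit Defensive.
Import Order.TTheory GRing.Theory Num.Theory.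
Local Open Scope ring_scope.

Definition st := (seq (nat * nat) * (nat -> nat -> int))%type.
Definition eqst (s1 s2 : st) := s1.1 =i s2.1 /\ forall a b, s1.2 a b = s2.2 a b.
Definition vv (ad : seq (nat * nat)) (h : nat -> nat -> int) a b : int :=
  if (a, b) \in ad then h a b else 0.

Definition Ucond (i j a b : nat) : bool :=
  ((a == i) && (b == j)) ||
  [&& (a < i)%N, (b < j)%N, (i - a == j - b)%N & (i - a < minn i j)%N].

Lemma step_eq x (s : st) i j : toggle_step x s (i, j) =
  (rcons s.1 (i, j), fun a b =>
    if (a == i) && (b == j) then Num.max (vv s.1 s.2 i.-1 j) (vv s.1 s.2 i j.-1) + x%:Z
    else if [&& (a < i)%N, (b < j)%N, (i - a == j - b)%N & (i - a < minn i j)%N]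
    then Num.max (vv s.1 s.2 a.-1 b) (vv s.1 s.2 a b.-1) + Num.min (vv s.1 s.2 a b.+1) (vv s.1 s.2 a.+1 b) - vv s.1 s.2 a b
    else s.2 a b).
Proof. by case: s. Qed.

Lemma step_out x s i j a b : ~~ Ucond i j a b -> (toggle_step x s (i, j)).2 a b = s.2 a b.
Proof. by rewrite step_eq /Ucond /= => /norP[/negbTE -> /negbTE ->]. Qed.

Lemma U_diag i j a b : Ucond i j a b -> (b + i = a + j)%N.
Proof. by case/orP => [/andP[/eqP -> /eqP ->]|]; lia. Qed.

Lemma step_vv x s i j p q : (q + i != p + j)%N ->
  vv (toggle_step x s (i, j)).1 (toggle_step x s (i, j)).2 p q = vv s.1 s.2 p q.
Proof.
move=> H; rewrite {1}/vv step_out; last by apply/negP => /U_diag; lia.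
rewrite step_eq /= mem_rcons in_cons /vv.
by have -> : ((p, q) == (i, j)) = false by apply/negbTE/negP => /eqP [] ? ?; lia.
Qed.

Definition near (i j p q : nat) : bool := (q + i <= p + j + 1)%N && (p + j <= q + i + 1)%N.

Lemma step_local x s s' i j a b :
  (forall p q, near i j p q -> vv s.1 s.2 p q = vv s'.1 s'.2 p q) ->
  Ucond i j a b -> (toggle_step x s (i, j)).2 a b = (toggle_step x s' (i, j)).2 a b.
Proof.
move=> Hn HU; rewrite !step_eq /=.
case: ifP => [_|Hc].
  by rewrite !Hn // /near; lia.
case: ifP => Hd; last by move: HU; rewrite /Ucond Hc Hd.
by rewrite !Hn // /near; move: Hd; lia.
Qed.

Definition far (c1 c2 : nat * nat) : bool :=
  (c1.1 + c2.2 + 2 <= c1.2 + c2.1)%N || (c1.2 + c2.1 + 2 <= c1.1 + c2.2)%N.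

Lemma step_swap x1 x2 s c1 c2 : far c1 c2 ->
  eqst (toggle_step x1 (toggle_step x2 s c2) c1) (toggle_step x2 (toggle_step x1 s c1) c2).
Proof.
case: c1 => i1 j1; case: c2 => i2 j2; rewrite /far /= => Hf.
split.
  by move=> p; rewrite !step_eq /= !mem_rcons !in_cons !mem_rcons !in_cons orbCA.
move=> a b.
have [H1|H1] := boolP (Ucond i1 j1 a b).
  rewrite (step_out _ _ (i := i2)); last by apply/negP => /U_diag; move: (U_diag H1); lia.
  apply: step_local => // p q Hn; rewrite step_vv //; move: Hn; rewrite /near; lia.
have [H2|H2] := boolP (Ucond i2 j2 a b).
  rewrite (step_out _ _ (i := i1)) //.
  apply: step_local => // p q Hn; rewrite step_vv //; move: Hn; rewrite /near; lia.
by rewrite !step_out.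
Qed.

Lemma eqst_refl s : eqst s s. Proof. by []. Qed.
Lemma eqst_sym s1 s2 : eqst s1 s2 -> eqst s2 s1.
Proof. by move=> [A B]; split => [p|a b]; rewrite ?A ?B. Qed.
Lemma eqst_trans s1 s2 s3 : eqst s1 s2 -> eqst s2 s3 -> eqst s1 s3.
Proof. by move=> [A B] [C D]; split => [p|a b]; rewrite ?A ?B. Qed.

Lemma step_cong x s1 s2 c : eqst s1 s2 -> eqst (toggle_step x s1 c) (toggle_step x s2 c).
Proof.
case: c => i j [A B].
have Hv p q : vv s1.1 s1.2 p q = vv s2.1 s2.2 p q by rewrite /vv A B.
split; first by move=> p; rewrite !step_eq /= !mem_rcons !in_cons A.
by move=> a b; rewrite !step_eq /= !Hv B.
Qed.

Definition ff (t : nat -> nat -> nat) (s : st) (c : nat * nat) := toggle_step (t c.1 c.2) s c.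

Lemma foldl_cong t l s1 s2 : eqst s1 s2 -> eqst (foldl (ff t) s1 l) (foldl (ff t) s2 l).
Proof. elim: l s1 s2 => //= c l IH s1 s2 H; apply: IH; exact: step_cong. Qed.

Definition sw (c : nat * nat) := (c.2, c.1).
Lemma swK : involutive sw. Proof. by case. Qed.
Lemma sw_inj : injective sw. Proof. exact: inv_inj swK. Qed.

Definition tr_st (s : st) : st := (map sw s.1, transpose s.2).

Lemma vv_tr s p q : vv (tr_st s).1 (tr_st s).2 p q = vv s.1 s.2 q p.
Proof.
by rewrite /vv /= -[(p, q)]/(sw (q, p)) mem_map //; apply: sw_inj.
Qed.

Lemma step_tr x s i j : eqst (toggle_step x (tr_st s) (j, i)) (tr_st (toggle_step x s (i, j))).
Proof.
split.
  move=> p; rewrite !step_eq /= map_rcons //.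
move=> a b; rewrite step_eq !vv_tr.
rewrite [in RHS]/tr_st /transpose /= step_eq /=.
have Hv p q : vv [seq sw i | i <- s.1] (transpose s.2) p q = vv s.1 s.2 q p
  by exact: (vv_tr s p q).
rewrite !Hv /transpose.
case: ifP => [/andP[/eqP -> /eqP ->]|Hc]; first by rewrite !eqxx /= maxC.
rewrite (andbC (b == i)) Hc.
case: ifP => Hd; case: ifP => He //; first by rewrite maxC minC.
  by move: Hd He; lia.
by move: Hd He; lia.
Qed.

Lemma foldl_tr t l s :
  eqst (foldl (ff (transpose t)) (tr_st s) (map sw l)) (tr_st (foldl (ff t) s l)).
Proof.
elim: l s => //= c l IH s.
apply: eqst_trans (IH (ff t s c)).
apply: foldl_cong; case: c => i j; exact: step_tr.
Qed.

Definition Rb (x y : nat * nat) : bool := ~~ [&& (y.1 <= x.1)%N, (y.2 <= x.2)%N & y != x].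

Lemma move_front t x p q s : all (far x) p ->
  eqst (foldl (ff t) s (p ++ x :: q)) (foldl (ff t) s (x :: p ++ q)).
Proof.
elim: p s => //= y p IH s /andP[Hxy Hp].
apply: eqst_trans (IH _ Hp) _ => /=.
apply: foldl_cong; exact: step_swap.
Qed.

Lemma Rb_far x y : x != y -> Rb x y -> Rb y x -> far x y.
Proof.
case: x => a b; case: y => c d; rewrite /Rb /far /= => Hne.
have -> : ((c, d) != (a, b)) = true by rewrite eq_sym.
rewrite Hne !andbT; lia.
Qed.

Lemma reorder t l1 l2 s : perm_eq l1 l2 -> uniq l2 -> pairwise Rb l1 -> pairwise Rb l2 ->
  eqst (foldl (ff t) s l1) (foldl (ff t) s l2).
Proof.
elim: l1 l2 s => [|x l1 IH] l2 s.
  by move=> /perm_size /esym /size0nil -> .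
move=> Hperm Hu /= /andP[Hx1 Hp1] Hp2.
have Hx : x \in l2 by rewrite -(perm_mem Hperm) mem_head.
move: Hperm Hu Hp2; case/splitPr: Hx => p q Hperm Hu Hp2.
have Hall : all (far x) p.
  - apply/allP => y Hy.
    have Hyx : y != x.
      by apply/eqP => E; move: Hu; rewrite cat_uniq /= -E Hy /= andbF.
    have Hy1 : y \in l1.
      have : y \in x :: l1 by rewrite (perm_mem Hperm) mem_cat Hy.
      by rewrite in_cons (negbTE Hyx).
    apply: Rb_far; first by rewrite eq_sym.
      exact: (allP Hx1).
    move: Hp2; rewrite pairwise_cat => /andP[/allrelP H _].
    by apply: H => //; rewrite mem_head.
apply: (eqst_trans _ (eqst_sym (move_front t q s Hall))).
rewrite /=; apply: IH.
- rewrite -(perm_cons x) (perm_trans Hperm) //.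
  by apply/permP => f; rewrite /= !count_cat /=; lia.
- have Hpq : perm_eq (p ++ x :: q) (x :: p ++ q) by apply/permP => f; rewrite /= !count_cat /=; lia.
  by move: Hu; rewrite (perm_uniq Hpq) /= => /andP[].
- done.
- move: Hp2; rewrite !pairwise_cat /= => /and4P[H1 -> _ ->]; rewrite !andbT.
  apply/allrelP => u v Hu' Hv'; apply: (allrelP H1) => //.
  by rewrite in_cons Hv' orbT.
Qed.

Definition Qb (x y : nat * nat) : bool := (x.1 < y.1)%N || ((x.1 == y.1) && (x.2 < y.2)%N).

Lemma pairwise_rows (f : nat -> nat) m n :
  pairwise Qb (flatten [seq [seq (i.+1, j.+1) | j <- iota 0 (f i)] | i <- iota m n]).
Proof.
elim: n m => [|n IH] m //=.
rewrite pairwise_cat IH andbT; apply/andP; split.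
  apply/allrelP => x y /mapP[j _ ->] /flatten_mapP[i Hi /mapP[k _ ->]].
  by move: Hi; rewrite mem_iota /Qb /=; lia.
rewrite pairwise_map.
have := iota_ltn_sorted 0 (f m); rewrite sorted_pairwise; last exact: ltn_trans.
apply: sub_pairwise => u v /= H; rewrite /Qb /=; lia.
Qed.

Lemma pairwise_boxes mu : pairwise Qb (boxes mu).
Proof. exact: pairwise_rows. Qed.

Lemma uniq_boxes mu : uniq (boxes mu).
Proof.
apply: (pairwise_uniq _ (pairwise_boxes mu)) => x; rewrite /Qb ltnn eqxx /=.
by rewrite ltnn.
Qed.

Lemma Rb_boxes mu : pairwise Rb (boxes mu).
Proof.
apply: sub_pairwise (pairwise_boxes mu) => [[a b] [c d]]; rewrite /Qb /Rb /= => H.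
apply/negP => /and3P[H1 H2 H3]; move: H H3; rewrite xpair_eqE; lia.
Qed.

Lemma mem_boxes mu a b : ((a, b) \in boxes mu) = in_shape mu a b.
Proof.
rewrite /in_shape; apply/flatten_mapP/idP.
  move=> [i]; rewrite mem_iota => Hi /mapP[j]; rewrite mem_iota => Hj [-> ->] /=.
  by move: Hi Hj; lia.
move=> /andP[/andP[Ha1 Ha2] /andP[Hb1 Hb2]].
exists a.-1; first by rewrite mem_iota; lia.
apply/mapP; exists b.-1; first by rewrite mem_iota; lia.
by congr pair; lia.
Qed.

Lemma sorted_all x l : sorted (fun a b => (b <= a)%N) (x :: l) -> all (fun y => (y <= x)%N) l.
Proof.
move=> H; have := order_path_min (leT := fun a b => (b <= a)%N) _ H.
by apply => a b c /= H1 H2; apply: leq_trans H2 H1.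
Qed.

Lemma nth_le_head l k : sorted (fun a b => (b <= a)%N) l -> (nth 0 l k <= head 0 l)%N.
Proof.
case: l => [|x l] //= Hs; first by rewrite nth_nil.
case: k => //= k; have [Hk|Hk] := ltnP k (size l).
  by apply: (allP (sorted_all Hs)); rewrite mem_nth.
by rewrite nth_default.
Qed.

Lemma count_nth l c a : sorted (fun a b => (b <= a)%N) l ->
  (a < count (fun x => c < x) l)%N = (c < nth 0 l a)%N.
Proof.
elim: l a => [|x l IH] a Hs; first by rewrite nth_nil.
have Hl : sorted (fun a b => (b <= a)%N) l by move: Hs => /= /path_sorted.
have Hall := sorted_all Hs.
have [Hc|Hc] := ltnP c x.
  case: a => [|a] /=; first by rewrite Hc.
  by rewrite Hc add1n ltnS IH.
have H0 : count (fun x => (c < x)%N) l = 0%N.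
  apply/eqP; rewrite -leqn0 leqNgt -has_count; apply/hasP => [[y Hy Hcy]].
  by have := allP Hall y Hy; lia.
have Hc' : (c < x)%N = false by apply/negbTE; rewrite -leqNgt.
rewrite /= H0 Hc' /=.
case: a => [|a] /=; first by rewrite Hc'.
have [Hk|Hk] := ltnP a (size l).
  have H : (nth 0%N l a <= x)%N := allP Hall _ (mem_nth 0%N Hk).
  by rewrite addn0 ltn0; apply/esym/negbTE; rewrite -leqNgt; lia.
by rewrite nth_default.
Qed.

Lemma in_shape_conj lam a b : is_partition lam ->
  in_shape (conj_part lam) b a = in_shape lam a b.
Proof.
move=> /andP[Hs _]; rewrite /in_shape /conj_part size_mkseq.
have [Hb|Hb] := boolP (0 < b <= head 0 lam)%N; last first.
  rewrite /=; apply/esym/negP => /andP[/andP[Ha1 Ha2] /andP[Hb1 Hb2]].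
  have := nth_le_head a.-1 Hs; move: Hb; lia.
rewrite /= nth_mkseq; last by lia.
have [Ha|Ha] := posnP a; first by rewrite Ha.
have := count_nth b.-1 a.-1 Hs.
set cnt := count _ lam => H.
have Hsz : (b <= nth 0 lam a.-1 -> a <= size lam)%N.
  move=> Hn; rewrite leqNgt; apply/negP => Hlt.
  by move: Hn; rewrite nth_default //; move: Hb; lia.
rewrite /=; apply/idP/idP => X.
  move: H Hsz X Hb Ha; lia.
move: H Hsz X Hb Ha; lia.
Qed.

Theorem proposition2p7 (lam : seq nat) (t : nat -> nat -> nat) :
  is_partition lam ->
  forall i j : nat, in_shape (conj_part lam) i j ->
    toggle (conj_part lam) (transpose t) i j = transpose (toggle lam t) i j.
Proof.
move=> Hp i j _.
set C := map sw (boxes (conj_part lam)).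
have HC : boxes (conj_part lam) = map sw C by rewrite /C mapK //; exact: swK.
pose st0 : st := ([::], fun _ _ => 0).
have E1 := foldl_tr t C st0.
have Hperm : perm_eq C (boxes lam).
  apply: uniq_perm; first by rewrite map_inj_uniq ?uniq_boxes //; exact: sw_inj.
    exact: uniq_boxes.
  move=> [a b]; rewrite -[(a, b)]/(sw (b, a)) mem_map; last exact: sw_inj.
  by rewrite !mem_boxes in_shape_conj.
have HRC : pairwise Rb C.
  rewrite pairwise_map; apply: sub_pairwise (Rb_boxes _) => [[a b] [c d]].
  by rewrite /relpre /Rb /sw /= !xpair_eqE; lia.
have E2 := reorder t st0 Hperm (uniq_boxes lam) HRC (Rb_boxes lam).
rewrite /toggle HC /transpose.
have -> := E1.2 i j.
exact: E2.2 j i.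
Qed.
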